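(* For every $n\ge0$, the maps $\varphi_L,\varphi_R\colon\mathcal{T}_n\to\mathcal{P}_n(1212)$ are bijections.
   Context: $\mathcal{T}_n$ is the set of binary trees on $n$ vertices labeled $1,\dots,n$ by the search tree property (vertices in the left subtree of $i$ are smaller than $i$, those in the right subtree larger). A left branch is a maximal sequence of vertices $v,c_L(v),c_L^2(v),\dots$ connected by left-child edges; right branches analogously. For $T\in\mathcal{T}_n$, $\varphi_L(T)$ is the set partition of $[n]$ whose blocks are the vertex sets of the maximal left branches of $T$ (i.e. $i\sim_L j$ iff $i,j$ lie on the same left branch), and $\varphi_R(T)$ is the partition into vertex sets of maximal right branches. Set partitions of $[n]$ are identified with restricted growth strings (RGS) $x_1\cdots x_n$: order blocks by smallest element and let $x_i=j$ if $i$ is in the $j$-th block; $\mathcal{P}_n$ is the set of all RGS of length $n$. A string $x$ contains a pattern string $\tau=\tau_1\cdots\tau_m$ if there are indices $i_1<\dots<i_m$ with $x_{i_a}<x_{i_b}\iff\tau_a<\tau_b$ and $x_{i_a}=x_{i_b}\iff\tau_a=\tau_b$; $\mathcal{P}_n(1212)$ is the set of RGS avoiding $1212$ (the non-crossing set partitions). *)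

(* Defs.v *)
From mathcomp Require Import all_boot.
Set Implicit Arguments. Unset Strict Implicit. Unset Printing Implicit Defensive.

(* Unlabeled binary tree shapes; a binary tree on n vertices labeled 1..n by
   the search-tree property is uniquely determined by its shape: the labels are
   the in-order positions (vertex with label off + size l + 1 where l is its
   left subtree and off the number of vertices preceding its subtree). *)
Inductive btree := Leaf | Node of btree & btree.

Fixpoint bsize (t : btree) : nat :=
  if t is Node l r then (bsize l + bsize r).+1 else 0.

Definition trees (n : nat) (t : btree) : Prop := bsize t = n.

(* lkeys t off top : for the vertices of t (labels off+1 .. off+bsize t), listed
   in increasing label order, the label of the top vertex of the maximal left
   branch containing it. [top] is Some v if the root of t is the left child of a
   vertex whose left branch has top v, and None otherwise. *)
Fixpoint lkeys (t : btree) (off : nat) (top : option nat) : seq nat :=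
  if t is Node l r then
    let v := off + bsize l + 1 in
    let tp := odflt v top in
    lkeys l off (Some tp) ++ tp :: lkeys r v None
  else [::].

(* same for maximal right branches *)
Fixpoint rkeys (t : btree) (off : nat) (top : option nat) : seq nat :=
  if t is Node l r then
    let v := off + bsize l + 1 in
    let tp := odflt v top in
    rkeys l off None ++ tp :: rkeys r v (Some tp)
  else [::].

(* RGS of the set partition of [n] given by a block-key for each i = 1..n:
   blocks ordered by smallest element (= first occurrence), x_i = j if i is in
   the j-th block: j = number of distinct keys among positions up to the first
   occurrence of the key of i. *)
Definition rgs_of_keys (s : seq nat) : seq nat :=
  [seq size (undup (take (index k s).+1 s)) | k <- s].

Definition phiL (t : btree) : seq nat := rgs_of_keys (lkeys t 0 None).
Definition phiR (t : btree) : seq nat := rgs_of_keys (rkeys t 0 None).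

Definition is_rgs (n : nat) (x : seq nat) : Prop :=
  size x = n /\
  forall i, i < n ->
    1 <= nth 0 x i <= (\max_(j < i) nth 0 x j).+1.

Definition contains (x tau : seq nat) : Prop :=
  exists y, subseq y x /\ size y = size tau /\
    forall a b, a < size tau -> b < size tau ->
      (nth 0 y a < nth 0 y b = (nth 0 tau a < nth 0 tau b)) /\
      ((nth 0 y a == nth 0 y b) = (nth 0 tau a == nth 0 tau b)).

Definition rgs1212 (n : nat) (x : seq nat) : Prop :=
  is_rgs n x /\ ~ contains x [:: 1; 2; 1; 2].

Definition bij_between (A : btree -> Prop) (B : seq nat -> Prop)
  (f : btree -> seq nat) : Prop :=
  (forall t, A t -> B (f t)) /\
  (forall t1 t2, A t1 -> A t2 -> f t1 = f t2 -> t1 = t2) /\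
  (forall x, B x -> exists t, A t /\ f t = x).

(* Main.v *)
Require Import Defs.
From mathcomp Require Import all_boot zify.
Set Implicit Arguments. Unset Strict Implicit. Unset Printing Implicit Defensive.


Definition keq (s s' : seq nat) := size s = size s' /\
  forall i j, i < size s -> j < size s ->
    (nth 0 s i == nth 0 s j) = (nth 0 s' i == nth 0 s' j).

Lemma keq_refl s : keq s s. Proof. by split. Qed.
Lemma keq_sym s s' : keq s s' -> keq s' s.
Proof. by case=> Hs H; split=> // i j Hi Hj; rewrite H // Hs. Qed.
Lemma keq_trans s1 s2 s3 : keq s1 s2 -> keq s2 s3 -> keq s1 s3.
Proof.
case=> H1 K1 [H2 K2]; split; first by rewrite H1.
by move=> i j Hi Hj; rewrite K1 // K2 // -H1.
Qed.

Lemma keq_map_inj f s : {in s &, injective f} -> keq (map f s) s.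
Proof.
move=> Hf; split; first by rewrite size_map.
move=> i j; rewrite size_map => Hi Hj; rewrite !(nth_map 0) //.
apply/eqP/eqP => [|->] //; apply: Hf; exact: mem_nth.
Qed.

Lemma keq_take m s s' : keq s s' -> keq (take m s) (take m s').
Proof.
case=> Hs K; split; first by rewrite !size_take Hs.
move=> i j; rewrite size_take => Hi Hj.
have Him : i < m by move: Hi; case: ifP => // /ltP ? ?; lia.
have Hjm : j < m by move: Hj; case: ifP => // /ltP ? ?; lia.
rewrite !nth_take // K //.
  by move: Hi; case: ifP => // /ltP ? ?; lia.
by move: Hj; case: ifP => // /ltP ? ?; lia.
Qed.

Lemma keq_drop m s s' : keq s s' -> keq (drop m s) (drop m s').
Proof.
case=> Hs K; split; first by rewrite !size_drop Hs.
move=> i j; rewrite size_drop => Hi Hj; rewrite !nth_drop K //; lia.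
Qed.

Lemma keq_rev s s' : keq s s' -> keq (rev s) (rev s').
Proof.
case=> Hs K; split; first by rewrite !size_rev Hs.
move=> i j; rewrite size_rev => Hi Hj; rewrite !nth_rev -?Hs // K //; lia.
Qed.

Definition NC (s : seq nat) := forall i j k l, i < j -> j < k -> k < l ->
  l < size s -> nth 0 s i = nth 0 s k -> nth 0 s j = nth 0 s l ->
  nth 0 s i = nth 0 s j.

Lemma NC_keq s s' : keq s s' -> NC s -> NC s'.
Proof.
case=> Hs K H i j k l Hij Hjk Hkl Hl E1 E2.
rewrite -Hs in Hl.
apply/eqP; rewrite -K; try lia.
apply/eqP; apply: (H i j k l) => //.
  by apply/eqP; rewrite K ?E1 //; lia.
by apply/eqP; rewrite K ?E2 //; lia.
Qed.

Lemma NC_rev s : NC s -> NC (rev s).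
Proof.
move=> H i j k l Hij Hjk Hkl; rewrite size_rev => Hl.
rewrite !nth_rev; try lia.
move=> E1 E2.
set n := size s in Hl *.
have := H (n - l.+1) (n - k.+1) (n - j.+1) (n - i.+1).
have L1 : n - l.+1 < n - k.+1 by lia.
have L2 : n - k.+1 < n - j.+1 by lia.
have L3 : n - j.+1 < n - i.+1 by lia.
have L4 : n - i.+1 < n by lia.
move=> /(_ L1 L2 L3 L4 (esym E2) (esym E1)) E.
by rewrite E1 -E E2.
Qed.

Lemma NC_catl A B : NC (A ++ B) -> NC A.
Proof.
move=> H i j k l Hij Hjk Hkl Hl.
have := H i j k l Hij Hjk Hkl; rewrite size_cat !nth_cat.
have -> : i < size A by lia. have -> : j < size A by lia.
have -> : k < size A by lia. have -> : l < size A by lia.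
move=> X; apply: X; lia.
Qed.

Lemma NC_catr A B : NC (A ++ B) -> NC B.
Proof.
move=> H i j k l Hij Hjk Hkl Hl.
have := H (size A + i) (size A + j) (size A + k) (size A + l).
rewrite size_cat !nth_cat.
have -> : (size A + i < size A) = false by lia.
have -> : (size A + j < size A) = false by lia.
have -> : (size A + k < size A) = false by lia.
have -> : (size A + l < size A) = false by lia.
rewrite !addKn; move=> X; apply: X; lia.
Qed.


Definition condL (A : seq nat) c (B : seq nat) :=
  head c A = c /\ (forall k, k \in B -> k \notin c :: A).

Lemma nth_catc A c B i : nth 0 (A ++ c :: B) i =
  if i < size A then nth 0 A i else if i == size A then c
  else nth 0 B (i - (size A).+1).
Proof.
rewrite nth_cat; case: ltnP => // H.
case: eqP => [->|H2]; first by rewrite subnn.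
have -> : i - size A = (i - (size A).+1).+1 by lia.
by [].
Qed.

Lemma condL_head A c B : condL A c B -> 0 < size A -> nth 0 A 0 = c.
Proof. by case: A => // a A [/= ->]. Qed.

Lemma condL_B A c B j : condL A c B -> j < size B ->
  (nth 0 B j == c) = false /\ (forall i, i < size A -> (nth 0 A i == nth 0 B j) = false).
Proof.
case=> _ H Hj; have := H _ (mem_nth 0 Hj); rewrite in_cons negb_or => /andP[H1 H2].
split; first exact: negbTE.
move=> i Hi; apply/negbTE; apply: contra H2 => /eqP <-; exact: mem_nth.
Qed.

Definition eqexp (A B : seq nat) i j :=
  let a := size A in
  if i < a then (if j < a then nth 0 A i == nth 0 A j
                 else if j == a then nth 0 A i == nth 0 A 0 else false)
  else if i == a then (if j < a then nth 0 A 0 == nth 0 A j else j == a)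
  else if j <= a then false else nth 0 B (i - a.+1) == nth 0 B (j - a.+1).

Lemma eqS A c B i j : condL A c B -> i < size (A ++ c :: B) -> j < size (A ++ c :: B) ->
  (nth 0 (A ++ c :: B) i == nth 0 (A ++ c :: B) j) = eqexp A B i j.
Proof.
move=> HL; rewrite size_cat /= => Hi Hj; rewrite !nth_catc /eqexp.
case: (ltngtP i (size A)) => Hi'; case: (ltngtP j (size A)) => Hj' //=.
- have Hb : j - (size A).+1 < size B by lia.
  have [_ H] := condL_B HL Hb. exact: H.
- by rewrite (condL_head HL) //; lia.
- have Hb : i - (size A).+1 < size B by lia.
  have [_ H] := condL_B HL Hb.
  by rewrite eq_sym H.
- have Hb : i - (size A).+1 < size B by lia.
  have [H _] := condL_B HL Hb. exact: H.
- by rewrite (condL_head HL) //; lia.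
- have Hb : j - (size A).+1 < size B by lia.
  have [H _] := condL_B HL Hb.
  by rewrite eq_sym H.
- by rewrite eqxx.
Qed.

Lemma keq_catL A c B A' c' B' : condL A c B -> condL A' c' B' ->
  keq A A' -> keq B B' -> keq (A ++ c :: B) (A' ++ c' :: B').
Proof.
move=> HL HL' [SA KA] [SB KB]; split; first by rewrite !size_cat /= SA SB.
move=> i j Hi Hj; rewrite !eqS //; last by move: Hi Hj; rewrite !size_cat /= SA SB.
all: try by move: Hi Hj; rewrite !size_cat /= SA SB.
rewrite /eqexp -SA; move: Hi Hj; rewrite size_cat /= => Hi Hj.
case: (ltngtP i (size A)) => Hi'; case: (ltngtP j (size A)) => Hj' //=;
  rewrite ?KA //; try lia.
rewrite KB //; lia.
Qed.

Lemma condL_rcons A c : head c A = c -> NC A -> NC (rcons A c).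
Proof.
move=> Hh H i j k l Hij Hjk Hkl; rewrite size_rcons => Hl.
rewrite !nth_rcons.
have Hi : i < size A by lia. have Hj : j < size A by lia. have Hk : k < size A by lia.
rewrite Hi Hj Hk.
case: (ltngtP l (size A)) => Hl'; first exact: H; first lia.
move=> E1 E2.
have H0 : nth 0 A 0 = c by case: A Hh Hi {H Hj Hk E1 E2 Hl Hl'} => //= a A.
case: (posnP i) => Hi0; first by rewrite Hi0 H0 E2.
rewrite E2 -H0; apply: esym; apply: (H 0 i j k) => //; lia.
Qed.

Lemma NC_cat_disj (X B : seq nat) : (forall k, k \in B -> k \notin X) -> NC X -> NC B -> NC (X ++ B).
Proof.
move=> D HX HB i j k l Hij Hjk Hkl; rewrite size_cat => Hl.
have notin : forall a b, a < size X -> size X <= b -> b < size X + size B ->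
    nth 0 (X ++ B) a = nth 0 (X ++ B) b -> False.
  move=> a b Ha Hb Hb' E; move: E; rewrite !nth_cat Ha.
  have -> : (b < size X) = false by lia.
  move=> E; have := D _ (mem_nth 0 (_ : b - size X < size B)); rewrite -E mem_nth //.
  by move=> /(_ ltac:(lia)).
have NX : forall m, m < size X -> nth 0 (X ++ B) m = nth 0 X m.
  by move=> m Hm; rewrite nth_cat Hm.
have NB : forall m, size X <= m -> nth 0 (X ++ B) m = nth 0 B (m - size X).
  by move=> m Hm; rewrite nth_cat; have -> : (m < size X) = false by lia.
case: (ltnP l (size X)) => Hl'.
- rewrite !NX; try lia. exact: HX.
- move=> E1 E2.
  case: (ltnP j (size X)) => Hj'; first by exfalso; exact: (notin j l Hj' Hl' Hl E2).
  case: (ltnP i (size X)) => Hi'; first by exfalso; apply: (notin i k Hi' (_ : size X <= k) (_ : k < size X + size B) E1); lia.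
  move: E1 E2; rewrite !NB; try lia.
  move=> E1 E2; apply: (HB _ (j - size X) (k - size X) (l - size X)) => //; lia.
Qed.

Lemma NC_catL A c B : condL A c B -> NC A -> NC B -> NC (A ++ c :: B).
Proof.
move=> [Hh D] HA HB; rewrite -cat_rcons; apply: NC_cat_disj => //.
  by move=> k /D; rewrite mem_rcons.
exact: condL_rcons.
Qed.

Lemma decompL s : NC s -> 0 < size s ->
  exists A c B, s = A ++ c :: B /\ condL A c B.
Proof.
move=> H Hs.
set s0 := nth 0 s 0.
have s0in : s0 \in rev s by rewrite mem_rev mem_nth.
set q := index s0 (rev s).
have Hq : q < size s by rewrite -(size_rev s) index_mem.
set p := size s - q.+1.
have Hp : p < size s by lia.
have Sp : nth 0 s p = s0 by rewrite /p -nth_rev // nth_index.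
have After : forall j, p < j -> j < size s -> nth 0 s j != s0.
  move=> j Hj1 Hj2.
  have Hq' : size s - j.+1 < q by lia.
  have := before_find 0 Hq'; rewrite nth_rev ?size_rev; last lia.
  have -> : size s - (size s - j.+1).+1 = j by lia.
  by move=> /= ->.
exists (take p s), s0, (drop p.+1 s); split.
  by rewrite -Sp -drop_nth // cat_take_drop.
split.
  rewrite /s0; case: (s) Hs => // x s' _ /=; by case: (p).
move=> k /(nthP 0) [jj]; rewrite size_drop nth_drop ltn_subRL => Hjj <-.
rewrite in_cons negb_or After /=; try lia; last exact: Hjj.
apply/negP => /(nthP 0) [i]; rewrite size_take Hp => Hi; rewrite nth_take // => Ei.
have A1 := After (p.+1 + jj) (leq_addr _ _) Hjj.
case: (posnP i) => Hi0.
  by move: A1; rewrite -Ei Hi0 eqxx.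
have : nth 0 s 0 = nth 0 s i.
  by apply: (H 0 i p (p.+1 + jj)) => //; rewrite ?Sp // leq_addr.
rewrite Ei -/s0 => E; by move: A1; rewrite -E eqxx.
Qed.

Lemma condL_char A c B : condL A c B ->
  nth 0 (A ++ c :: B) (size A) = nth 0 (A ++ c :: B) 0 /\
  forall j, size A < j -> j < size (A ++ c :: B) ->
    (nth 0 (A ++ c :: B) j == nth 0 (A ++ c :: B) 0) = false.
Proof.
move=> HL; have N0 : nth 0 (A ++ c :: B) 0 = c.
  by case: A HL => [|a A] [/= H _].
rewrite N0; split; first by rewrite nth_catc ltnn eqxx.
move=> j Hj; rewrite size_cat /= => Hj'; rewrite nth_catc.
have -> : (j < size A) = false by lia. have -> : (j == size A) = false by lia.
have Hb : j - (size A).+1 < size B by lia.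
by have [-> _] := condL_B HL Hb.
Qed.

Lemma uniq_aux A c B A' c' B' : condL A c B -> condL A' c' B' ->
  keq (A ++ c :: B) (A' ++ c' :: B') -> size A' <= size A.
Proof.
move=> HL HL' [S K]; rewrite leqNgt; apply/negP => Hlt.
have [_ H] := condL_char HL. have [H' _] := condL_char HL'.
have Ha' : size A' < size (A ++ c :: B) by rewrite S size_cat /=; lia.
have := K (size A') 0 Ha' (leq_ltn_trans (leq0n _) Ha').
by rewrite H' eqxx H.
Qed.

Lemma uniqL A c B A' c' B' : condL A c B -> condL A' c' B' ->
  keq (A ++ c :: B) (A' ++ c' :: B') -> size A = size A'.
Proof.
move=> H1 H2 K; apply/eqP; rewrite eqn_leq (uniq_aux H1 H2 K) (uniq_aux H2 H1 (keq_sym K)).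
done.
Qed.

Lemma drop_cons_cat (A B : seq nat) c : drop (size A).+1 (A ++ c :: B) = B.
Proof. by elim: A => /= [|a A //]; rewrite drop0. Qed.

Definition condR (A : seq nat) c (B : seq nat) := condL (rev B) c (rev A).

Lemma rev_catc (A B : seq nat) c : rev (A ++ c :: B) = rev B ++ c :: rev A.
Proof. by rewrite rev_cat rev_cons cat_rcons. Qed.

Lemma keq_catR A c B A' c' B' : condR A c B -> condR A' c' B' ->
  keq A A' -> keq B B' -> keq (A ++ c :: B) (A' ++ c' :: B').
Proof.
move=> H1 H2 KA KB; rewrite -(revK (A ++ _)) -(revK (A' ++ _)); apply: keq_rev.
rewrite !rev_catc; apply: keq_catL => //; exact: keq_rev.
Qed.

Lemma NC_catR A c B : condR A c B -> NC A -> NC B -> NC (A ++ c :: B).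
Proof.
move=> H HA HB; rewrite -(revK (A ++ _)); apply: NC_rev.
rewrite rev_catc; apply: NC_catL => //; exact: NC_rev.
Qed.

Lemma decompR s : NC s -> 0 < size s ->
  exists A c B, s = A ++ c :: B /\ condR A c B.
Proof.
move=> H Hs; have Hs' : 0 < size (rev s) by rewrite size_rev.
have [A [c [B [E HL]]]] := decompL (NC_rev H) Hs'.
exists (rev B), c, (rev A); split; last by rewrite /condR !revK.
by rewrite -rev_catc -E revK.
Qed.

Lemma uniqR A c B A' c' B' : condR A c B -> condR A' c' B' ->
  keq (A ++ c :: B) (A' ++ c' :: B') -> size A = size A'.
Proof.
move=> H1 H2 K.
have K' := keq_rev K; rewrite !rev_catc in K'.
have := uniqL H1 H2 K'; rewrite !size_rev => SB.
case: K => S _; move: S; rewrite !size_cat /= SB; lia.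
Qed.


Definition swap (q p k : nat) := if k == q then p else k.

Lemma size_lkeys t off top : size (lkeys t off top) = bsize t.
Proof. by elim: t off top => //= l IHl r IHr off top; rewrite size_cat /= IHl IHr; lia. Qed.
Lemma size_rkeys t off top : size (rkeys t off top) = bsize t.
Proof. by elim: t off top => //= l IHl r IHr off top; rewrite size_cat /= IHl IHr; lia. Qed.

Lemma lkeys_range t off top k : k \in lkeys t off top ->
  (off < k <= off + bsize t) || (top == Some k).
Proof.
elim: t off top => //= l IHl r IHr off top.
rewrite mem_cat in_cons => /orP[/IHl|/orP[/eqP->|/IHr]].
- case/orP; first by move=> ?; apply/orP; left; lia.
  case: top => [p|] /= /eqP [<-]; rewrite ?eqxx ?orbT //; apply/orP; left; lia.
- case: top => [p|] /=; rewrite ?eqxx ?orbT //; apply/orP; left; lia.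
- by rewrite orbF => ?; apply/orP; left; lia.
Qed.

Lemma rkeys_range t off top k : k \in rkeys t off top ->
  (off < k <= off + bsize t) || (top == Some k).
Proof.
elim: t off top => //= l IHl r IHr off top.
rewrite mem_cat in_cons => /orP[/IHl|/orP[/eqP->|/IHr]].
- by rewrite orbF => ?; apply/orP; left; lia.
- case: top => [p|] /=; rewrite ?eqxx ?orbT //; apply/orP; left; lia.
- case/orP; first by move=> ?; apply/orP; left; lia.
  case: top => [p|] /= /eqP [<-]; rewrite ?eqxx ?orbT //; apply/orP; left; lia.
Qed.

Lemma lkeys_shift t d off top :
  lkeys t (d + off) (omap (addn d) top) = map (addn d) (lkeys t off top).
Proof.
elim: t off top => //= l IHl r IHr off top.
rewrite map_cat /= -IHl -IHr /=.
by case: top => [p|] /=; rewrite !addnA.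
Qed.

Lemma rkeys_shift t d off top :
  rkeys t (d + off) (omap (addn d) top) = map (addn d) (rkeys t off top).
Proof.
elim: t off top => //= l IHl r IHr off top.
rewrite map_cat /= -IHl -IHr /=.
by case: top => [p|] /=; rewrite !addnA.
Qed.

Lemma lkeys_swap t off p q : ~~ (off < p <= off + bsize t) -> ~~ (off < q <= off + bsize t) ->
  lkeys t off (Some p) = map (swap q p) (lkeys t off (Some q)).
Proof.
elim: t off p q => //= l IHl r IHr off p q Hp Hq.
rewrite map_cat /= (IHl off p q); try lia.
rewrite [swap q p q]/swap eqxx; congr (_ ++ _ :: _); apply/esym/map_id_in => k /lkeys_range /=.
by rewrite orbF /swap => Hk; case: eqP => // E; rewrite E in Hk; lia.
Qed.

Lemma rkeys_swap t off p q : ~~ (off < p <= off + bsize t) -> ~~ (off < q <= off + bsize t) ->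
  rkeys t off (Some p) = map (swap q p) (rkeys t off (Some q)).
Proof.
elim: t off p q => //= l IHl r IHr off p q Hp Hq.
rewrite map_cat /= (IHr _ p q); try lia.
rewrite [swap q p q]/swap eqxx; congr (_ ++ _ :: _); apply/esym/map_id_in => k /rkeys_range /=.
by rewrite orbF /swap => Hk; case: eqP => // E; rewrite E in Hk; lia.
Qed.

Lemma swap_inj (s : seq nat) lo hi v p : (forall k, k \in s -> lo < k <= hi) ->
  lo < v <= hi -> ~~ (lo < p <= hi) -> {in s &, injective (swap v p)}.
Proof.
move=> R Hv Hp a b /R Ha /R Hb; rewrite /swap.
case: eqP => Ea; case: eqP => Eb //; lia.
Qed.

Lemma lkeys_top t off p : ~~ (off < p <= off + bsize t) ->
  keq (lkeys t off None) (lkeys t off (Some p)).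
Proof.
case: t => [|l r] Hp; first exact: keq_refl.
have Hp' := Hp; rewrite /= in Hp'.
set v := off + bsize l + 1.
have E : lkeys (Node l r) off (Some p) = map (swap v p) (lkeys (Node l r) off None).
  rewrite /= map_cat /= -/v (@lkeys_swap l off p v); try (rewrite /v; lia).
  rewrite [swap v p v]/swap eqxx; congr (_ ++ _ :: _); apply/esym/map_id_in.
  by move=> k /lkeys_range /=; rewrite orbF /swap => Hk; case: eqP => // E; rewrite E in Hk; lia.
rewrite E; apply: keq_sym; apply: keq_map_inj; apply: (@swap_inj _ off (off + bsize (Node l r))).
- by move=> k /lkeys_range; rewrite orbF.
- rewrite /v /=; lia.
- exact: Hp.
Qed.

Lemma rkeys_top t off p : ~~ (off < p <= off + bsize t) ->
  keq (rkeys t off None) (rkeys t off (Some p)).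
Proof.
case: t => [|l r] Hp; first exact: keq_refl.
have Hp' := Hp; rewrite /= in Hp'.
set v := off + bsize l + 1.
have E : rkeys (Node l r) off (Some p) = map (swap v p) (rkeys (Node l r) off None).
  rewrite /= map_cat /= -/v (@rkeys_swap r v p v); try (rewrite /v /= in Hp *; lia).
  rewrite [swap v p v]/swap eqxx; congr (_ ++ _ :: _); apply/esym/map_id_in.
  by move=> k /rkeys_range /=; rewrite orbF /swap => Hk; case: eqP => // E; rewrite E in Hk; lia.
rewrite E; apply: keq_sym; apply: keq_map_inj; apply: (@swap_inj _ off (off + bsize (Node l r))).
- by move=> k /rkeys_range; rewrite orbF.
- rewrite /v /=; lia.
- exact: Hp.
Qed.

Lemma head_self (s s' : seq nat) p : head p (s ++ p :: s') = head p s.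
Proof. by case: s. Qed.

Lemma lkeys_head t off p : head p (lkeys t off (Some p)) = p.
Proof. by elim: t off p => //= l IHl r _ off p; rewrite head_self IHl. Qed.

Lemma rkeys_last t off p : last p (rkeys t off (Some p)) = p.
Proof. by elim: t off p => //= l _ r IHr off p; rewrite last_cat /= IHr. Qed.

Lemma head_rev (s : seq nat) x : head x (rev s) = last x s.
Proof. by case/lastP: s => // s y; rewrite rev_rcons last_rcons. Qed.

Lemma lkeys_node l r : lkeys (Node l r) 0 None =
  lkeys l 0 (Some (bsize l).+1) ++ (bsize l).+1 :: lkeys r (bsize l).+1 None.
Proof. by rewrite /= add0n addn1. Qed.

Lemma rkeys_node l r : rkeys (Node l r) 0 None =
  rkeys l 0 None ++ (bsize l).+1 :: rkeys r (bsize l).+1 (Some (bsize l).+1).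
Proof. by rewrite /= add0n addn1. Qed.

Lemma condL_tree l r : condL (lkeys l 0 (Some (bsize l).+1)) (bsize l).+1
  (lkeys r (bsize l).+1 None).
Proof.
split; first exact: lkeys_head.
move=> k /lkeys_range; rewrite orbF in_cons => Hk.
apply/norP; split; first by apply/eqP; lia.
apply/negP => /lkeys_range /orP [|/eqP [E]]; lia.
Qed.

Lemma condR_tree l r : condR (rkeys l 0 None) (bsize l).+1
  (rkeys r (bsize l).+1 (Some (bsize l).+1)).
Proof.
split; first by rewrite head_rev rkeys_last.
move=> k; rewrite mem_rev => /rkeys_range; rewrite orbF in_cons => Hk.
apply/norP; split; first by apply/eqP; lia.
rewrite mem_rev; apply/negP => /rkeys_range /orP [|/eqP [E]]; lia.
Qed.

Lemma keqL_left l : keq (lkeys l 0 (Some (bsize l).+1)) (lkeys l 0 None).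
Proof. by apply: keq_sym; apply: lkeys_top; lia. Qed.

Lemma keqL_right r v : keq (lkeys r v None) (lkeys r 0 None).
Proof.
have := lkeys_shift r v 0 None; rewrite addn0 /= => ->.
by apply: keq_map_inj => a b _ _; apply: addnI.
Qed.

Lemma keqR_right r v : keq (rkeys r v (Some v)) (rkeys r 0 None).
Proof.
apply: keq_trans (_ : keq (rkeys r v None) _).
  by apply: keq_sym; apply: rkeys_top; lia.
have := rkeys_shift r v 0 None; rewrite addn0 /= => ->.
by apply: keq_map_inj => a b _ _; apply: addnI.
Qed.


Lemma injL t1 t2 : keq (lkeys t1 0 None) (lkeys t2 0 None) -> t1 = t2.
Proof.
elim: t1 t2 => [|l1 IHl r1 IHr] [|l2 r2] //.
- by case=> S _; move: S; rewrite !size_lkeys.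
- by case=> S _; move: S; rewrite !size_lkeys.
rewrite !lkeys_node => K.
have SA := uniqL (condL_tree l1 r1) (condL_tree l2 r2) K.
have KA := keq_take (size (lkeys l1 0 (Some (bsize l1).+1))) K.
rewrite take_size_cat // take_size_cat // in KA.
have KB := keq_drop (size (lkeys l1 0 (Some (bsize l1).+1))).+1 K.
rewrite drop_cons_cat SA drop_cons_cat in KB.
have El : l1 = l2.
  apply: IHl; apply: keq_trans (keq_sym (keqL_left l1)) _.
  exact: keq_trans KA (keqL_left l2).
have Er : r1 = r2.
  apply: IHr; apply: keq_trans (keq_sym (keqL_right r1 (bsize l1).+1)) _.
  exact: keq_trans KB (keqL_right r2 _).
by rewrite El Er.
Qed.

Lemma injR t1 t2 : keq (rkeys t1 0 None) (rkeys t2 0 None) -> t1 = t2.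
Proof.
elim: t1 t2 => [|l1 IHl r1 IHr] [|l2 r2] //.
- by case=> S _; move: S; rewrite !size_rkeys.
- by case=> S _; move: S; rewrite !size_rkeys.
rewrite !rkeys_node => K.
have SA := uniqR (condR_tree l1 r1) (condR_tree l2 r2) K.
have KA := keq_take (size (rkeys l1 0 None)) K.
rewrite take_size_cat // take_size_cat // in KA.
have KB := keq_drop (size (rkeys l1 0 None)).+1 K.
rewrite drop_cons_cat SA drop_cons_cat in KB.
have El : l1 = l2 by apply: IHl.
have Er : r1 = r2.
  apply: IHr; apply: keq_trans (keq_sym (keqR_right r1 (bsize l1).+1)) _.
  exact: keq_trans KB (keqR_right r2 _).
by rewrite El Er.
Qed.

Lemma surjL n s : size s <= n -> NC s ->
  exists t, bsize t = size s /\ keq (lkeys t 0 None) s.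
Proof.
elim: n s => [|n IH] s Hs H.
  by exists Leaf; move: Hs; rewrite leqn0 => /nilP ->; split=> //; exact: keq_refl.
case: (posnP (size s)) => Hs0.
  by exists Leaf; move/eqP/nilP: Hs0 => ->; split=> //; exact: keq_refl.
have [A [c [B [E HL]]]] := decompL H Hs0.
rewrite E in H Hs *.
have HA := NC_catl H. have HB := NC_catr (A := [:: c]) (NC_catr H).
rewrite size_cat /= in Hs.
have [l [Sl Kl]] := IH A ltac:(lia) HA.
have [r [Sr Kr]] := IH B ltac:(lia) HB.
exists (Node l r); split; first by rewrite /= size_cat /= Sl Sr; lia.
rewrite lkeys_node; apply: keq_catL (condL_tree l r) HL _ _.
  exact: keq_trans (keqL_left l) Kl.
exact: keq_trans (keqL_right r _) Kr.
Qed.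

Lemma surjR n s : size s <= n -> NC s ->
  exists t, bsize t = size s /\ keq (rkeys t 0 None) s.
Proof.
elim: n s => [|n IH] s Hs H.
  by exists Leaf; move: Hs; rewrite leqn0 => /nilP ->; split=> //; exact: keq_refl.
case: (posnP (size s)) => Hs0.
  by exists Leaf; move/eqP/nilP: Hs0 => ->; split=> //; exact: keq_refl.
have [A [c [B [E HL]]]] := decompR H Hs0.
rewrite E in H Hs *.
have HA := NC_catl H. have HB := NC_catr (A := [:: c]) (NC_catr H).
rewrite size_cat /= in Hs.
have [l [Sl Kl]] := IH A ltac:(lia) HA.
have [r [Sr Kr]] := IH B ltac:(lia) HB.
exists (Node l r); split; first by rewrite /= size_cat /= Sl Sr; lia.
rewrite rkeys_node; apply: keq_catR (condR_tree l r) HL _ _.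
  exact: Kl.
exact: keq_trans (keqR_right r _) Kr.
Qed.

Lemma ncL t : NC (lkeys t 0 None).
Proof.
elim: t => [|l IHl r IHr]; first by move=> i j k l; rewrite /=; lia.
rewrite lkeys_node; apply: NC_catL (condL_tree l r) _ _.
  exact: NC_keq (keq_sym (keqL_left l)) IHl.
exact: NC_keq (keq_sym (keqL_right r _)) IHr.
Qed.

Lemma ncR t : NC (rkeys t 0 None).
Proof.
elim: t => [|l IHl r IHr]; first by move=> i j k l; rewrite /=; lia.
rewrite rkeys_node; apply: NC_catR (condR_tree l r) IHl _.
exact: NC_keq (keq_sym (keqR_right r _)) IHr.
Qed.


Definition D (s : seq nat) m := size (undup (take m s)).
Definition g (s : seq nat) k := D s (index k s).+1.

Lemma rgs_of_keysE s : rgs_of_keys s = map (g s) s.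
Proof. by []. Qed.

Lemma D_mono s m1 m2 : m1 <= m2 -> D s m1 <= D s m2.
Proof.
move=> H; apply: uniq_leq_size; first exact: undup_uniq.
move=> y; rewrite !mem_undup -(take_takel s H); exact: mem_take.
Qed.

Lemma D_step s m m' x : x \notin take m s -> x \in take m' s -> m <= m' ->
  (D s m).+1 <= D s m'.
Proof.
move=> H1 H2 H; have : uniq (x :: undup (take m s)) by rewrite /= mem_undup H1 undup_uniq.
move=> U; have := uniq_leq_size U; apply => y; rewrite in_cons !mem_undup.
case/orP => [/eqP ->|] //; rewrite -(take_takel s H); exact: mem_take.
Qed.

Lemma D_succ s i : i < size s -> D s i.+1 <= (D s i).+1.
Proof.
move=> Hi; rewrite /D -[(size (undup (take i s))).+1]/(size (nth 0 s i :: undup (take i s))).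
apply: (uniq_leq_size (undup_uniq _)) => y.
by rewrite in_cons !mem_undup (take_nth 0 Hi) mem_rcons in_cons.
Qed.

Lemma D0 s : D s 0 = 0. Proof. by rewrite /D take0. Qed.

Lemma keq_rgs s : keq (rgs_of_keys s) s.
Proof.
rewrite rgs_of_keysE; apply: keq_map_inj => a b Ha Hb E.
apply/eqP; apply: contraT => Hab.
have Hi : index a s != index b s.
  by apply: contra Hab => /eqP /(index_inj 0 Ha Hb) ->.
have key : forall a b, a \in s -> b \in s -> index a s < index b s -> g s a < g s b.
  move=> a' b' Ha' Hb' Hlt; rewrite /g.
  apply: (leq_ltn_trans (D_mono s Hlt)); apply: (D_step (x := b')) => //.
  - by rewrite in_take // ltnn.
  - by rewrite in_take.
move: Hi; case: (ltngtP (index a s) (index b s)) => // H _.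
  by move: (key a b Ha Hb H); rewrite E ltnn.
by move: (key b a Hb Ha H); rewrite E ltnn.
Qed.

Lemma Dmax s i : i <= size s ->
  D s i <= \max_(j < i) nth 0 (rgs_of_keys s) j.
Proof.
elim: i => [|i IH] Hi; first by rewrite D0.
rewrite big_ord_recr /=.
have Hi' : i < size s by [].
rewrite rgs_of_keysE (nth_map 0) //.
case Hin : (nth 0 s i \in take i s).
  apply: leq_trans (leq_maxl _ _).
  apply: leq_trans (IH (ltnW Hi')).
  apply: uniq_leq_size; first exact: undup_uniq.
  move=> y; rewrite !mem_undup (take_nth 0 Hi') mem_rcons in_cons.
  by case/orP => [/eqP ->|].
apply: leq_trans (leq_maxr _ _).
rewrite /g.
have -> : index (nth 0 s i) s = i.
  apply/eqP; rewrite eqn_leq index_nth //=.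
  by move: Hin; rewrite in_take ?mem_nth // => /negbT; rewrite -leqNgt.
by [].
Qed.

Lemma rgs_is_rgs s : is_rgs (size s) (rgs_of_keys s).
Proof.
split; first by rewrite rgs_of_keysE size_map.
move=> i Hi; rewrite {1}rgs_of_keysE (nth_map 0) //.
apply/andP; split.
  rewrite /g; have := @D_step s 0 (index (nth 0 s i) s).+1 (nth 0 s i).
  rewrite D0 take0; apply=> //.
  by rewrite in_take ?mem_nth.
apply: leq_trans (_ : D s i.+1 <= _).
  by apply: D_mono; rewrite ltnS index_nth.
apply: leq_trans (D_succ Hi) _.
by rewrite ltnS; apply: Dmax; apply: ltnW.
Qed.

Lemma appear n x : is_rgs n x -> forall i, i <= n -> forall w, 0 < w ->
  w <= \max_(j < i) nth 0 x j -> exists j, j < i /\ nth 0 x j = w.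
Proof.
move=> [Sx Rx]; elim=> [|i IH] Hi w Hw0 Hw; first by move: Hw; rewrite big_ord0; lia.
move: Hw; rewrite big_ord_recr /=; set M := \max_(j < i) _ => Hw.
case: (leqP w M) => H.
  by have [j [Hj Ej]] := IH (ltnW Hi) w Hw0 H; exists j; split=> //; lia.
exists i; split=> //.
have := Rx i Hi; rewrite -/M => /andP[_ H2].
move: Hw; rewrite leq_max => /orP[|]; lia.
Qed.

Lemma rgs_keq_eq n x y : is_rgs n x -> is_rgs n y -> keq x y -> x = y.
Proof.
move=> Hx Hy [S K]; have [Sx Rx] := Hx; have [Sy Ry] := Hy.
have main : forall i, i <= n -> forall j, j < i -> nth 0 x j = nth 0 y j.
  elim=> [|i IH] Hi j Hj //.
  case: (ltnP j i) => Hji; first by apply: IH => //; lia.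
  have -> : j = i by lia.
  have EM : \max_(j < i) nth 0 x j = \max_(j < i) nth 0 y j.
    by apply: eq_bigr => k _; apply: IH (ltn_ord k); lia.
  case Hh : (has (fun j => nth 0 x j == nth 0 x i) (iota 0 i)).
    move/hasP: Hh => [k]; rewrite mem_iota add0n => /andP[_ Hk] /eqP Ek.
    have := K k i ltac:(lia) ltac:(lia); rewrite Ek eqxx => /esym/eqP Ek'.
    by rewrite -Ek -Ek' IH //; lia.
  move/hasPn: Hh => Hh.
  have Hh' : forall k, k < i -> nth 0 y k != nth 0 y i.
    move=> k Hk; rewrite -K; try lia.
    by apply: Hh; rewrite mem_iota; lia.
  have newx : nth 0 x i = (\max_(j < i) nth 0 x j).+1.
    have /andP[H1 H2] := Rx i Hi.
    case: (leqP (nth 0 x i) (\max_(j < i) nth 0 x j)) => H3; last by apply/eqP; rewrite eqn_leq H2 H3.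
    have [k [Hk Ek]] := appear Hx (ltnW Hi) H1 H3.
    by move: (Hh k); rewrite mem_iota add0n Hk Ek eqxx => /(_ isT).
  have newy : nth 0 y i = (\max_(j < i) nth 0 y j).+1.
    have /andP[H1 H2] := Ry i Hi.
    case: (leqP (nth 0 y i) (\max_(j < i) nth 0 y j)) => H3; last by apply/eqP; rewrite eqn_leq H2 H3.
    have [k [Hk Ek]] := appear Hy (ltnW Hi) H1 H3.
    by move: (Hh' k Hk); rewrite Ek eqxx.
  by rewrite newx newy EM.
apply: (eq_from_nth (x0 := 0)); first by rewrite Sx Sy.
by move=> i Hi; apply: (main n (leqnn n)); rewrite -Sx.
Qed.

Lemma subseq_idx (a : nat) y x : subseq (a :: y) x ->
  exists i, i < size x /\ nth 0 x i = a /\ subseq y (drop i.+1 x).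
Proof.
elim: x => // z x IH /=; case: eqP => [->|_] H.
  by exists 0; rewrite drop0.
by have [i [H1 [H2 H3]]] := IH H; exists i.+1.
Qed.

Lemma idx_subseq (a : nat) y x i : i < size x -> nth 0 x i = a ->
  subseq y (drop i.+1 x) -> subseq (a :: y) x.
Proof.
elim: x i => // z x IH [|i] /= Hi Ha Hs.
  by rewrite Ha eqxx; rewrite drop0 in Hs.
case: eqP => _; last exact: (IH i Hi Ha Hs).
apply: subseq_trans (subseq_cons y a) _; exact: (IH i Hi Ha Hs).
Qed.

Lemma idx_subseq_drop (x y : seq nat) m j : m <= j -> j < size x ->
  subseq y (drop j.+1 x) -> subseq (nth 0 x j :: y) (drop m x).
Proof.
move=> H1 H2 H3; apply: (idx_subseq (i := j - m)).
- by rewrite size_drop; lia.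
- by rewrite nth_drop; congr nth; lia.
- by rewrite drop_drop; have -> : (j - m).+1 + m = j.+1 by lia.
Qed.

Lemma pat_ok a b : a < b -> forall a' b', a' < 4 -> b' < 4 ->
  (nth 0 [:: a; b; a; b] a' < nth 0 [:: a; b; a; b] b' =
   (nth 0 [:: 1; 2; 1; 2] a' < nth 0 [:: 1; 2; 1; 2] b')) /\
  ((nth 0 [:: a; b; a; b] a' == nth 0 [:: a; b; a; b] b') =
   (nth 0 [:: 1; 2; 1; 2] a' == nth 0 [:: 1; 2; 1; 2] b')).
Proof.
move=> Hab; have h1 : (b < a) = false by lia.
have h2 : (a == b) = false by lia. have h3 : (b == a) = false by lia.
case=> [|[|[|[|a']]]] // [|[|[|[|b']]]] // _ _;
  by rewrite /= ?ltnn ?eqxx ?Hab ?h1 ?h2 ?h3.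
Qed.

Lemma contains_of n x i j k l : is_rgs n x -> i < j -> j < k -> k < l -> l < n ->
  nth 0 x i = nth 0 x k -> nth 0 x j = nth 0 x l -> nth 0 x i != nth 0 x j ->
  contains x [:: 1; 2; 1; 2].
Proof.
move=> Hx Hij Hjk Hkl Hl E1 E2 Ne; have [Sx Rx] := Hx.
have sub4 : forall i j k l, i < j -> j < k -> k < l -> l < size x ->
    subseq [:: nth 0 x i; nth 0 x j; nth 0 x k; nth 0 x l] x.
  move=> i' j' k' l' ? ? ? ?; rewrite -[X in subseq _ X](drop0 x).
  apply: idx_subseq_drop; try lia.
  apply: idx_subseq_drop; try lia.
  apply: idx_subseq_drop; try lia.
  apply: idx_subseq_drop; try lia.
  exact: sub0seq.
case: (ltngtP (nth 0 x i) (nth 0 x j)) => H; last by rewrite H eqxx in Ne.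
  exists [:: nth 0 x i; nth 0 x j; nth 0 x i; nth 0 x j]; split.
    by rewrite {2}E1 {2}E2; apply: sub4; lia.
  by split=> //; apply: pat_ok.
have /andP[Hj0 _] := Rx j (ltac:(lia)).
have /andP[_ Hi1] := Rx i (ltac:(lia)).
have Hin : i <= n by lia.
have Hjm : nth 0 x j <= \max_(j < i) nth 0 x j by lia.
have [f [Hf Ef]] := appear Hx Hin Hj0 Hjm.
exists [:: nth 0 x j; nth 0 x i; nth 0 x j; nth 0 x i]; split.
  by rewrite -{1}Ef {2}E1; apply: sub4; lia.
by split=> //; apply: pat_ok.
Qed.

Lemma contains_notNC x : contains x [:: 1; 2; 1; 2] -> ~ NC x.
Proof.
case=> y [Hs [Sy P]] HN.
case: y Hs Sy P => [|y0 [|y1 [|y2 [|y3 [|]]]]] // Hs _ P.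
have E02 : y0 = y2 by apply/eqP; rewrite (P 0 2 isT isT).2.
have E13 : y1 = y3 by apply/eqP; rewrite (P 1 3 isT isT).2.
have N01 : y0 <> y1 by apply/eqP; rewrite (P 0 1 isT isT).2.
subst y2 y3.
have [i0 [H0 [A0 S0]]] := subseq_idx Hs.
have [i1 [H1 [A1 S1]]] := subseq_idx S0.
have [i2 [H2 [A2 S2]]] := subseq_idx S1.
have [i3 [H3 [A3 S3]]] := subseq_idx S2.
move: H1 H2 H3 A1 A2 A3; rewrite !size_drop !nth_drop => H1 H2 H3 A1 A2 A3.
apply: N01; rewrite -A0 -A1; apply: (HN i0 (i0.+1 + i1) (i0.+1 + (i1.+1 + i2)) (i0.+1 + (i1.+1 + (i2.+1 + i3)))).
all: try (clear -H0 H1 H2 H3; lia).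
- by move: H3; rewrite !ltn_subRL.
- by rewrite A0 A2.
- by rewrite A1 A3.
Qed.


Lemma bij_gen (K : btree -> seq nat) n :
  (forall t, size (K t) = bsize t) -> (forall t, NC (K t)) ->
  (forall t1 t2, keq (K t1) (K t2) -> t1 = t2) ->
  (forall s, NC s -> exists t, bsize t = size s /\ keq (K t) s) ->
  bij_between (trees n) (rgs1212 n) (fun t => rgs_of_keys (K t)).
Proof.
move=> Ks Knc Kinj Ksurj; split; [|split].
- move=> t Ht; split.
    by have := rgs_is_rgs (K t); rewrite Ks Ht.
  move=> C; apply: (contains_notNC C).
  exact: NC_keq (keq_sym (keq_rgs _)) (Knc t).
- move=> t1 t2 _ _ E; apply: Kinj.
  apply: keq_trans (keq_sym (keq_rgs (K t1))) _; rewrite E; exact: keq_rgs.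
- move=> x [Hx Hc].
  have Hnc : NC x.
    move=> i j k l Hij Hjk Hkl Hl E1 E2.
    case: (eqVneq (nth 0 x i) (nth 0 x j)) => // Ne; exfalso; apply: Hc.
    apply: (contains_of Hx Hij Hjk Hkl _ E1 E2 Ne); by rewrite -Hx.1.
  have [t [St Kt]] := Ksurj x Hnc.
  exists t; split; first by rewrite /trees St Hx.1.
  apply: (rgs_keq_eq (n := n)) => //.
    by have := rgs_is_rgs (K t); rewrite Ks St Hx.1.
  exact: keq_trans (keq_rgs _) Kt.
Qed.

Theorem lemma14 (n : nat) :
  bij_between (trees n) (rgs1212 n) phiL /\
  bij_between (trees n) (rgs1212 n) phiR.
Proof.
split.
- apply: (bij_gen (K := fun t => lkeys t 0 None)).
  + by move=> t; rewrite size_lkeys.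
  + exact: ncL.
  + exact: injL.
  + by move=> s Hs; apply: (surjL (leqnn _) Hs).
- apply: (bij_gen (K := fun t => rkeys t 0 None)).
  + by move=> t; rewrite size_rkeys.
  + exact: ncR.
  + exact: injR.
  + by move=> s Hs; apply: (surjR (leqnn _) Hs).
Qed.
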